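(* Let $c>0$ and $T>0$. For $t\in[0,T]$ and a function $h(\xi)$ on $\mathbb{R}^2$ define \[ \|h\|_{t}:=\left\|\frac{(1+|\xi|)^3 h(\xi)}{e^{-c|\xi|t}+e^{-c|\xi|(T-t)}}\right\|_{L^\infty(\mathbb{R}^2_\xi)}, \] and for $\hat f(\xi,s)$ defined for $s\in[0,T]$ set $\|\hat f\|:=\sup_{s\in[0,T]}\|\hat f(\cdot,s)\|_s$. There exists $K>0$ (independent of $T$) such that for any $\hat f$ with $\|\hat f\|<+\infty$ and all $t\in[0,T]$, \[ \left\|\int_0^t e^{-2c|\xi|(t-s)}|\xi|\,\hat f(\xi,s)\,ds\right\|_t\leqslant K\|\hat f\|. \]
   Context: $\xi\in\mathbb{R}^2$ is the Fourier variable. *)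

(* Defs.v *)
From HB Require Import structures.
From mathcomp Require Import all_boot all_order all_algebra.
From mathcomp Require Import all_classical all_reals all_analysis.
From mathcomp Require Import complex ess_sup_inf.
Set Implicit Arguments. Unset Strict Implicit. Unset Printing Implicit Defensive.
Import Order.TTheory GRing.Theory Num.Theory.
Import numFieldNormedType.Exports.
Local Open Scope classical_set_scope.
Local Open Scope ring_scope.

Definition leb2 (R : realType) := (@lebesgue_measure R \x @lebesgue_measure R)%E.

Definition xnorm (R : realType) (xi : R * R) : R := Num.sqrt (xi.1 ^+ 2 + xi.2 ^+ 2).

Definition cmod (R : realType) (z : R[i]) : R :=
  Num.sqrt (complex.Re z ^+ 2 + complex.Im z ^+ 2).

Definition cintegral (R : realType) (D : set R) (g : R -> R[i]) : R[i] :=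
  Complex (Rintegral (@lebesgue_measure R) D (fun s => complex.Re (g s)))
          (Rintegral (@lebesgue_measure R) D (fun s => complex.Im (g s))).

Definition wnorm (R : realType) (c T t : R) (h : R * R -> R[i]) : \bar R :=
  ess_sup (@leb2 R) (fun xi =>
    ((1 + xnorm xi) ^+ 3 * cmod (h xi)
      / (expR (- c * xnorm xi * t) + expR (- c * xnorm xi * (T - t))))%:E).

Definition fnorm (R : realType) (c T : R) (f : R * R -> R -> R[i]) : \bar R :=
  ereal_sup [set wnorm c T s (fun xi => f xi s) | s in `[0, T]].

(* Main.v *)
Require Import Defs.
From HB Require Import structures.
From mathcomp Require Import all_boot all_order all_algebra.
From mathcomp Require Import all_classical all_reals all_analysis.
From mathcomp Require Import complex ess_sup_inf.
Import Order.TTheory GRing.Theory Num.Theory.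
Import numFieldNormedType.Exports.
From mathcomp Require Import ring lra measurable_realfun.
Local Open Scope classical_set_scope.
Local Open Scope ring_scope.
Lemma der_exp (R : realType) (a b x : R) :
  is_derive x 1%R (fun s => expR (a * (s - b)))%R (expR (a * (x - b)) * a)%R.
Proof.
have h1 : is_derive x 1%R (fun s => a * (s - b))%R a.
  by apply: is_derive_eq; rewrite subr0 scaler1.
exact: (is_derive1_comp (is_derive_expR _) h1).
Qed.

Lemma der_F (R : realType) (c r t s : R) : (0 < c)%R ->
  is_derive s 1%R (fun s => expR (c * r * (s - t)) / c)%R (r * expR (c * r * (s - t)))%R.
Proof.
move=> c0; have h3 := @der_exp R (c * r) t s.
apply: is_derive_eq.
by rewrite scaler0 add0r /GRing.scale /=; field; rewrite lt0r_neq0.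
Qed.

Lemma cont_f (R : realType) (a b r : R) : continuous (fun s : R => r * expR (a * (s - b)))%R.
Proof.
move=> x; have h3 := @der_exp R a b x.
have h4 := is_deriveM (is_derive_cst r x 1%R) h3.
have : derivable (fun s : R => r * expR (a * (s - b)))%R x 1%R by case: h4.
by move/derivable1_diffP/differentiable_continuous.
Qed.

Local Open Scope ereal_scope.
Lemma int_exp (R : realType) (c r t : R) : (0 < c)%R -> (0 < t)%R ->
 \int[lebesgue_measure]_(s in `[0%R,t]) (r * expR (c*r*(s-t)))%:E = ((1 - expR (- (c*r*t)))/c)%:E.
Proof.
move=> c0 t0.
rewrite (@continuous_FTC2 _ _ (fun s => expR (c * r * (s - t)) / c)%R) //.
- by rewrite subrr mulr0 expR0 sub0r mulrN -EFinB mulrBl.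
- by apply: continuous_subspaceT; exact: cont_f.
- split.
  + move=> x _; by case: (@der_F R c r t x c0).
  + apply: cvg_at_right_filter.
    have : derivable (fun s => expR (c * r * (s - t)) / c)%R 0%R 1%R.
      by case: (@der_F R c r t 0 c0).
    by move/derivable1_diffP/differentiable_continuous.
  + apply: cvg_at_left_filter.
    have : derivable (fun s => expR (c * r * (s - t)) / c)%R t 1%R.
      by case: (@der_F R c r t t c0).
    by move/derivable1_diffP/differentiable_continuous.
- move=> x _; have h := @der_F R c r t x c0.
  by rewrite derive1E derive_val.
Qed.

Lemma cont_f2 (R : realType) (a b r C0 : R) : continuous (fun s : R => C0 * (r * expR (a * (s - b))))%R.
Proof.
move=> x; have h3 := @der_exp R a b x.
have h4 := is_deriveM (is_derive_cst r x 1%R) h3.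
have h5 := is_deriveM (is_derive_cst C0 x 1%R) h4.
have : derivable (fun s : R => C0 * (r * expR (a * (s - b))))%R x 1%R by case: h5.
by move/derivable1_diffP/differentiable_continuous.
Qed.

Lemma bound_part (R : realType) (c r t C0 : R) (u : R -> R) (N : set R) :
  (0 < c)%R -> (0 <= r)%R -> (0 <= t)%R -> (0 <= C0)%R ->
  measurable N -> lebesgue_measure N = 0 ->
  measurable_fun `[0%R, t] u ->
  (forall s, s \in `[0%R, t] -> ~ N s -> `|u s| <= C0 * (r * expR (c * r * (s - t))))%R ->
  (`|Rintegral lebesgue_measure `[0%R, t] u| <= C0 / c)%R.
Proof.
move=> c0 r0 t0 C00 mN N0 mu hb.
have cC : (0 <= C0 / c)%R by rewrite divr_ge0 // ltW.
have [->|tpos] := eqVneq t 0%R.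
  by rewrite set_itv1 Rintegral_set1 normr0.
have {tpos} tpos : (0 < t)%R by rewrite lt0r tpos.
have mg : measurable_fun `[0%R, t] (EFin \o (fun s => (C0 * (r * expR (c * r * (s - t))))%R)).
  apply/measurable_EFinP; apply: measurable_funS (continuous_measurable_fun _) => //.
  exact: cont_f2.
have mau : measurable_fun `[0%R, t] (EFin \o (fun s => `|u s|)%R).
  by apply/measurable_EFinP; apply: measurableT_comp => //.
have ib : \int[lebesgue_measure]_(s in `[0%R, t]) (`|u s|)%:E <= (C0 / c)%:E.
  apply: (@le_trans _ _ (\int[lebesgue_measure]_(s in `[0%R, t]) (C0 * (r * expR (c * r * (s - t))))%:E)).
    apply: ae_ge0_le_integral => //.
    - by move=> x _; rewrite lee_fin mulr_ge0 // mulr_ge0 // expR_ge0.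
    exists N; split => // s /= H; apply: contrapT => Ns; apply: H => Ds.
    by rewrite lee_fin; exact: hb s Ds Ns.
  under eq_integral do rewrite EFinM.
  rewrite ge0_integralZl_EFin //; last first.
    - by apply/measurable_EFinP; apply: measurable_funS (continuous_measurable_fun _) => //; exact: cont_f.
    - by move=> x _; rewrite lee_fin mulr_ge0 // expR_ge0.
  rewrite int_exp // -EFinM lee_fin ler_wpM2l //.
  rewrite -[X in (_ <= X)%R]mul1r ler_pM2r ?invr_gt0 //.
have iu : lebesgue_measure.-integrable `[0%R, t] (EFin \o u).
  apply/integrableP; split; first exact/measurable_EFinP.
  by apply: le_lt_trans ib _; rewrite ltey.
apply: le_trans (le_normr_Rintegral _ iu) _ => //.
rewrite /Rintegral -[X in (_ <= X)%R]/(fine (C0 / c)%:E).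
apply: fine_le => //.
rewrite ge0_fin_numE; first by apply: le_lt_trans ib _; rewrite ltey.
by apply: integral_ge0 => x _; rewrite lee_fin.
Qed.

Lemma leb2_sigma_finite (R : realType) : sigma_finite setT (@leb2 R).
Proof.
have /sigma_finiteP[F [TF ndF Foo]] := sigma_finiteT (@lebesgue_measure R).
exists (fun n => F n `*` F n).
  rewrite -setXTT TF predeqE => -[x y]; split.
    move=> [/= [n _ Fnx] [k _ Gky]]; exists (maxn n k) => //; split.
    - by move: x Fnx; exact/subsetPset/ndF/leq_maxl.
    - by move: y Gky; exact/subsetPset/ndF/leq_maxr.
  by move=> [n _ []/= ? ?]; split; exists n.
move=> k; have [? ?] := Foo k.
split; first exact: measurableX.
by rewrite /leb2 product_measure1E// lte_mul_pinfty// ge0_fin_numE.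
Qed.
HB.instance Definition _ (R : realType) := Measure.on (@leb2 R).
HB.instance Definition _ (R : realType) := Measure_isSigmaFinite.Build _ _ _
  (@leb2 R) (@leb2_sigma_finite R).

Local Close Scope ereal_scope.

Lemma ReM (R : realType) (x : R) (z : R[i]) : complex.Re ((x%:C)%C * z) = x * complex.Re z.
Proof. by case: z => a b /=; rewrite mul0r subr0. Qed.

Lemma ImM (R : realType) (x : R) (z : R[i]) : complex.Im ((x%:C)%C * z) = x * complex.Im z.
Proof. by case: z => a b /=; rewrite mul0r addr0. Qed.

Lemma Re_le_cmod (R : realType) (z : R[i]) : `|complex.Re z| <= cmod z.
Proof.
rewrite /cmod -sqrtr_sqr; apply: ler_wsqrtr; rewrite lerDl; exact: sqr_ge0.
Qed.

Lemma Im_le_cmod (R : realType) (z : R[i]) : `|complex.Im z| <= cmod z.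
Proof.
rewrite /cmod -sqrtr_sqr; apply: ler_wsqrtr; rewrite lerDr; exact: sqr_ge0.
Qed.

Lemma cmod_le (R : realType) (a b : R) : cmod (Complex a b) <= `|a| + `|b|.
Proof.
rewrite /cmod /= -(@ger0_norm _ (`|a| + `|b|)) ?addr_ge0 // -sqrtr_sqr; apply: ler_wsqrtr.
rewrite sqrrD !real_normK ?num_real //.
have := mulr_ge0 (normr_ge0 a) (normr_ge0 b); rewrite mulr2n; lra.
Qed.

Lemma leb2_pos (R : realType) : (0 < (@leb2 R) [set: R * R])%E.
Proof.
apply: (@lt_le_trans _ _ ((@leb2 R) (`[0%R, 1%R] `*` `[0%R, 1%R]))).
  rewrite /leb2 product_measure1E //= lebesgue_measure_itv /=.
  by rewrite lte_fin ltr01 oppr0 adde0 mule1 lte_fin ltr01.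
apply: le_measure.
- by apply/mem_set; apply: measurableX.
- by apply/mem_set.
- by [].
Qed.

Theorem lemma8 (R : realType) (c : R) (hc : 0 < c) :
  exists K : R, 0 < K /\
  forall (T : R), 0 < T ->
  forall f : R * R -> R -> R[i],
    measurable_fun ([set: R * R] `*` `[0, T]) (fun p => complex.Re (f p.1 p.2)) ->
    measurable_fun ([set: R * R] `*` `[0, T]) (fun p => complex.Im (f p.1 p.2)) ->
    (fnorm c T f < +oo)%E ->
    forall t : R, t \in `[(0:R), T] ->
      (wnorm c T t (fun xi =>
         cintegral `[(0:R), t] (fun s =>
           (expR (- (2 * c) * xnorm xi * (t - s)) * xnorm xi)%:C%C * f xi s))%R
       <= K%:E * fnorm c T f)%E.
Proof.
exists (2 / c); split; first by rewrite divr_gt0.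
move=> T T0 f mRe mIm fnlt t tin.
have l2p := leb2_pos R.
have xn0 (xi : R * R) : 0 <= xnorm xi by exact: sqrtr_ge0.
have Dpos (xi : R * R) (s : R) : 0 < expR (- c * xnorm xi * s) + expR (- c * xnorm xi * (T - s)).
  by rewrite addr_gt0 // expR_gt0.
have wn0 s g : (0 <= wnorm c T s g)%E.
  apply: ess_sup_ger => // xi; rewrite lee_fin divr_ge0 ?mulr_ge0 ?exprn_ge0 ?addr_ge0 ?sqrtr_ge0 //.
have M0 : (0 <= fnorm c T f)%E.
  apply: le_trans (wn0 0 (fun xi => f xi 0)) _.
  apply: ereal_sup_ubound; exists 0 => //.
  by rewrite /= in_itv /= lexx ltW.
set M := fnorm c T f in M0 fnlt *.
have Mfin : M \is a fin_num by rewrite ge0_fin_numE.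
rewrite -(fineK Mfin).
set m := fine M.
have m0 : 0 <= m by rewrite fine_ge0.
have hs : forall s, s \in `[0, T] -> \forall xi \ae (@leb2 R),
    (((1 + xnorm xi) ^+ 3 * cmod (f xi s)
      / (expR (- c * xnorm xi * s) + expR (- c * xnorm xi * (T - s))))%:E <= m%:E)%E.
  move=> s sin; apply/ess_supP; rewrite fineK //.
  by apply: ereal_sup_ubound; exists s.
pose Phi (p : (R * R) * R) := m * (expR (- c * xnorm p.1 * p.2) + expR (- c * xnorm p.1 * (T - p.2))).
pose Psi (p : (R * R) * R) := (1 + xnorm p.1) ^+ 3 * cmod (f p.1 p.2).
pose Dom := [set: R * R] `*` `[0, T].
have mDom : measurable Dom by apply: measurableX.
pose E := Dom `&` (fun p => Phi p < Psi p) @^-1` [set true].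
have mxn : measurable_fun [set: R * R] (@xnorm R).
  apply: measurableT_comp; first exact: continuous_measurable_fun (@sqrt_continuous R).
  by apply: measurable_funD; apply: measurable_funX; [exact: measurable_fst | exact: measurable_snd].
have mxn1 : measurable_fun [set: (R * R) * R] (fun p : (R * R) * R => xnorm p.1).
  exact: measurableT_comp mxn measurable_fst.
have mPhi : measurable_fun Dom Phi.
  apply: measurable_funS (_ : measurable_fun setT Phi) => //.
  apply: measurable_funM => //; apply: measurable_funD.
  - apply: measurableT_comp; first exact: measurable_expR.
    apply: measurable_funM; last exact: measurable_snd.
    by apply: measurable_funM.
  - apply: measurableT_comp; first exact: measurable_expR.
    apply: measurable_funM; first by apply: measurable_funM.
    by apply: measurable_funB => //; exact: measurable_snd.
have mPsi : measurable_fun Dom Psi.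
  apply: measurable_funM.
    apply: measurable_funX; apply: measurable_funD => //.
    exact: measurable_funS mxn1.
  apply: measurableT_comp; first exact: continuous_measurable_fun (@sqrt_continuous R).
  by apply: measurable_funD; apply: measurable_funX.
have mE : measurable E by exact: measurable_fun_ltr.
have ysec : forall s, (@leb2 R) (ysection E s) = 0%E.
  move=> s; have [sin|sout] := boolP (s \in `[0, T]).
    case: (hs s sin) => A [mA A0 sub].
    apply/eqP; rewrite eq_le measure_ge0 andbT -A0.
    apply: le_measure.
    - by apply/mem_set; apply: measurable_ysection.
    - exact/mem_set.
    move=> xi; rewrite /ysection /= inE => -[_ hlt]; apply: sub => /=.
    rewrite lee_fin; apply/negP; rewrite -ltNge ltr_pdivlMr //.
  rewrite (_ : ysection E s = set0) ?measure0 //; apply/seteqP; split => // xi.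
  rewrite /ysection /= inE => -[[_ /= hs'] _].
  by move/negP: sout; apply.
have hF := indic_fubini_tonelli (@leb2 R) (@lebesgue_measure R) mE.
rewrite indic_fubini_tonelli_FE // indic_fubini_tonelli_GE // in hF.
have h0 : (\int[@lebesgue_measure R]_y ((@leb2 R) \o ysection E) y = 0)%E.
  by apply: integral0_eq => s _; exact: ysec.
rewrite h0 in hF.
have hae : \forall xi \ae (@leb2 R), lebesgue_measure (xsection E xi) = 0%E.
  have := (ae_eq_integral_abs (@leb2 R) measurableT (measurable_fun_xsection (@lebesgue_measure R) mE)).1.
  move=> H; have {H} : ae_eq (@leb2 R) [set: R * R] (lebesgue_measure \o xsection E) (cst 0%E).
    apply: H; rewrite -[RHS]hF; apply: eq_integral => x _; rewrite gee0_abs //.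
  by apply: (@filterS _ _ (ae_filter_ringOfSetsType (@leb2 R))) => xi /(_ I).
rewrite -EFinM; apply/ess_supP.
apply: (@filterS _ _ (ae_filter_ringOfSetsType (@leb2 R))) hae => xi hxi.
move: tin; rewrite in_itv /= => /andP[t0 tT].
set r := xnorm xi.
set Dt := expR (- c * r * t) + expR (- c * r * (T - t)).
have Dt0 : 0 < Dt := Dpos xi t.
have r0 : 0 <= r := xn0 xi.
have r1 : 0 < (1 + r) ^+ 3 by rewrite exprn_gt0 // ltr_pwDl.
set C0 := m * Dt / (1 + r) ^+ 3.
have r1' : 1 + r != 0 by rewrite lt0r_neq0 // ltr_pwDl.
have C00 : 0 <= C0 by apply: divr_ge0; [apply: mulr_ge0 => //; exact: ltW | exact: ltW].
have mxs : measurable (xsection E xi) by exact: measurable_xsection.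
have key : forall s, s \in `[0, t] -> ~ xsection E xi s ->
    cmod (f xi s) * (expR (- (2 * c) * r * (t - s)) * r) <= C0 * (r * expR (c * r * (s - t))).
  move=> s; rewrite in_itv /= => /andP[s0 st] nE.
  have sT : s \in `[0, T] by rewrite in_itv /= s0 (le_trans st tT).
  have hle : Psi (xi, s) <= Phi (xi, s).
    rewrite leNgt; apply/negP => hlt; apply: nE.
    rewrite /xsection /= inE; split => //; split => //.
  have hcm : cmod (f xi s) <= m * (expR (- c * r * s) + expR (- c * r * (T - s))) / (1 + r) ^+ 3.
    by rewrite ler_pdivlMr // mulrC.
  apply: le_trans (ler_wpM2r _ hcm) _; first by rewrite mulr_ge0 // expR_ge0.
  have ex : (expR (- c * r * s) + expR (- c * r * (T - s))) * expR (- (2 * c) * r * (t - s))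
      <= Dt * expR (c * r * (s - t)).
    rewrite /Dt !mulrDl -!expRD; apply: lerD.
      by rewrite le_eqVlt; apply/orP; left; apply/eqP; congr expR; ring.
    rewrite ler_expR -subr_ge0.
    rewrite (_ : _ - _ = 2 * (c * r * (t - s))); last by ring.
    by rewrite mulr_ge0 // mulr_ge0 ?mulr_ge0 ?subr_ge0 // ltW.
  have e1 : m * (expR (- c * r * s) + expR (- c * r * (T - s))) / (1 + r) ^+ 3 *
      (expR (- (2 * c) * r * (t - s)) * r) = (m * r / (1 + r) ^+ 3) *
      ((expR (- c * r * s) + expR (- c * r * (T - s))) * expR (- (2 * c) * r * (t - s))).
    by field.
  have e2 : C0 * (r * expR (c * r * (s - t))) = (m * r / (1 + r) ^+ 3) * (Dt * expR (c * r * (s - t))).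
    by rewrite /C0; field.
  rewrite e1 e2; apply: ler_wpM2l => //.
  by apply: divr_ge0; [apply: mulr_ge0 | apply: ltW].
have mgs : measurable_fun `[0, t] (fun s : R => ((xi : R * R), s)).
  by apply: measurable_funS (measurable_fun_pair _ _).
have subD : (fun s : R => ((xi : R * R), s)) @` `[0, t] `<=` Dom.
  move=> _ [s hs0 <-]; split => //=.
  move: hs0; rewrite /= !in_itv /= => /andP[-> st] /=; exact: le_trans st tT.
have mRes : measurable_fun `[0, t] (fun s => complex.Re (f xi s)).
  exact: (measurable_comp mDom subD mRe mgs).
have mIms : measurable_fun `[0, t] (fun s => complex.Im (f xi s)).
  exact: (measurable_comp mDom subD mIm mgs).
have me2 : measurable_fun `[0, t] (fun s : R => expR (- (2 * c) * r * (t - s)) * r).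
  apply: measurable_funM => //; apply: measurableT_comp; first exact: measurable_expR.
  apply: measurable_funM => //; apply: measurable_funB => //.
have ha : `|Rintegral lebesgue_measure `[0, t] (fun s => complex.Re
    ((expR (- (2 * c) * r * (t - s)) * r)%:C%C * f xi s))| <= C0 / c.
  apply: (@bound_part R c r t C0 _ (xsection E xi)) => //.
  - rewrite (_ : (fun s => _) = (fun s => (expR (- (2 * c) * r * (t - s)) * r) * complex.Re (f xi s))).
      exact: measurable_funM.
    by apply/funext => s; rewrite ReM.
  - move=> s sin nE; rewrite ReM normrM ger0_norm ?mulr_ge0 ?expR_ge0 //.
    apply: le_trans (key s sin nE); rewrite mulrC; apply: ler_wpM2r; last exact: Re_le_cmod.
    by rewrite mulr_ge0 ?expR_ge0.
have hb : `|Rintegral lebesgue_measure `[0, t] (fun s => complex.Im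
    ((expR (- (2 * c) * r * (t - s)) * r)%:C%C * f xi s))| <= C0 / c.
  apply: (@bound_part R c r t C0 _ (xsection E xi)) => //.
  - rewrite (_ : (fun s => _) = (fun s => (expR (- (2 * c) * r * (t - s)) * r) * complex.Im (f xi s))).
      exact: measurable_funM.
    by apply/funext => s; rewrite ImM.
  - move=> s sin nE; rewrite ImM normrM ger0_norm ?mulr_ge0 ?expR_ge0 //.
    apply: le_trans (key s sin nE); rewrite mulrC; apply: ler_wpM2r; last exact: Im_le_cmod.
    by rewrite mulr_ge0 ?expR_ge0.
rewrite /cintegral lee_fin ler_pdivrMr //.
apply: le_trans (ler_wpM2l (ltW r1) (le_trans (cmod_le _ _ _) (lerD ha hb))) _.
rewrite le_eqVlt; apply/orP; left; apply/eqP.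
by rewrite /C0; field; rewrite r1' lt0r_neq0.
Qed.
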